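(* Let $W=\langle s,t: s^2=t^2=(st)^m=1\rangle$ be a Coxeter group of rank $2$ with $S=\{s,t\}$, where $m\ge2$ is the order of $st$, and let $w_0$ be its longest element. Then $e_S=\operatorname{Av}(\langle w_0\rangle)-\operatorname{Av}(W)$.
   Context: For a subgroup $U$ of $W$, $\operatorname{Av}(U)=\frac1{|U|}\sum_{u\in U}u\in\mathbb CW$. Descent algebra data: for $J\subseteq S$, $X_J=\{w\in W:\ell(rw)>\ell(w)\ \forall r\in J\}$, $x_J=\sum_{x\in X_J}x^{-1}$, $X_J^\sharp=\{x\in X_J:x^{-1}Jx\subseteq S\}$; for $K,L\subseteq S$, $m_{KL}=|X_K\cap X_L^\sharp|$ if $L\subseteq K$ and $0$ otherwise; the matrix $(m_{KL})$ is invertible and the elements $e_L$ ($L\subseteq S$) are defined by $x_K=\sum_{L\subseteq S}m_{KL}e_L$ for all $K\subseteq S$. *)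

(* Defs.v *)
From mathcomp Require Import all_boot all_order all_algebra all_fingroup all_field.
Set Implicit Arguments. Unset Strict Implicit. Unset Printing Implicit Defensive.
Import GRing.Theory.
Local Open Scope group_scope.

Section Descent.
Variable gT : finGroupType.

Definition setpow (A : {set gT}) (n : nat) : {set gT} :=
  iter n (fun B => A * B) [set 1].

(* word length of w w.r.t. the generating set A: the least n with w in A^n
   (minimal words have length < #|gT|, so searching n < #|gT| suffices). *)
Definition wlen (A : {set gT}) (w : gT) : nat :=
  find (fun n => w \in setpow A n) (iota 0 #|gT|).

Definition Xset (W A J : {set gT}) : {set gT} :=
  [set w in W | [forall r in J, wlen A w < wlen A (r * w)]].

Definition Xsharp (W A J : {set gT}) : {set gT} :=
  [set x in Xset W A J | (J :^ x) \subset A].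

Definition mKL (W A K L : {set gT}) : nat :=
  if L \subset K then #|Xset W A K :&: Xsharp W A L| else 0.

(* group algebra C W, realised as complex-valued functions on gT
   (elements supported in W); gel g is the basis element g. *)
Definition gel (g : gT) : {ffun gT -> algC} := [ffun h => ((h == g)%:R)%R].

Definition sc (c : algC) (f : {ffun gT -> algC}) : {ffun gT -> algC} :=
  [ffun h => (c * f h)%R].

Definition xJ (W A J : {set gT}) : {ffun gT -> algC} :=
  (\sum_(x in Xset W A J) gel x^-1)%R.

Definition Av (U : {set gT}) : {ffun gT -> algC} :=
  sc ((#|U|%:R)^-1)%R (\sum_(u in U) gel u)%R.

Definition e_rel (W A : {set gT}) (e : {set gT} -> {ffun gT -> algC}) : Prop :=
  forall K : {set gT}, K \subset A ->
    xJ W A K = (\sum_(L : {set gT} | L \subset A) sc (mKL W A K L)%:R (e L))%R.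

End Descent.

(* Main.v *)
Require Import Defs.
From mathcomp Require Import all_boot all_order all_algebra all_fingroup all_field.
From mathcomp Require Import all_solvable zify.
Import GRing.Theory Num.Theory.
Set Implicit Arguments. Unset Strict Implicit.
Local Open Scope group_scope.

Section Alt.
Context {gT : finGroupType}.
Implicit Types a b w : gT.

Fixpoint alt a b (k : nat) : gT := if k is k'.+1 then a * alt b a k' else 1.

Lemma alt0 a b : alt a b 0 = 1. Proof. by []. Qed.
Lemma altS a b k : alt a b k.+1 = a * alt b a k. Proof. by []. Qed.
Lemma alt1 a b : alt a b 1 = a. Proof. by rewrite altS mulg1. Qed.

Lemma alt_cat j k a b :
  alt a b (j + k) = alt a b j * (if odd j then alt b a k else alt a b k).
Proof.
elim: j a b => [|j IH] a b /=; first by rewrite mul1g.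
by rewrite IH mulgA; case: (odd j).
Qed.

Lemma alt_rcons k a b : alt a b k.+1 = alt a b k * (if odd k then b else a).
Proof. by rewrite -addn1 alt_cat; case: (odd k); rewrite alt1. Qed.

Lemma alt_even i a b : alt a b i.*2 = (a * b) ^+ i.
Proof.
elim: i => [|i IH]; first by rewrite expg0.
by rewrite doubleS !altS IH expgS mulgA.
Qed.

Lemma alt_odd i a b : alt a b i.*2.+1 = (a * b) ^+ i * a.
Proof. by rewrite alt_rcons odd_double alt_even. Qed.

Lemma inv2 {a} : #[a] = 2 -> a^-1 = a.
Proof.
move=> ha; apply/eqP; rewrite eq_invg_mul.
by have := expg_order a; rewrite ha expgS expg1 => ->.
Qed.

Lemma mul2 {a} : #[a] = 2 -> a * a = 1.
Proof. by move=> ha; rewrite -{1}(inv2 ha) mulVg. Qed.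

Lemma alt_inv a b k : #[a] = 2 -> #[b] = 2 ->
  (alt a b k)^-1 = if odd k then alt a b k else alt b a k.
Proof.
move=> ha hb; elim: k => [|k IH]; first by rewrite invg1.
rewrite {1}alt_rcons invMg IH /=; case: (odd k) => /=.
  by rewrite inv2.
by rewrite inv2.
Qed.

Lemma alt_double k a b : #[a] = 2 -> #[b] = 2 ->
  alt a b (k + k) = alt a b k * (alt b a k)^-1.
Proof.
by move=> ha hb; rewrite alt_cat alt_inv.
Qed.

Lemma N1 a b m n : #[a] = 2 -> #[b] = 2 -> #[a * b] = m -> (2 <= m)%N ->
  (0 < n)%N -> (n < m + m)%N -> alt a b n != 1.
Proof.
move=> ha hb hab hm n0 nlt.
rewrite -(odd_double_half n); case on: (odd n).
  rewrite add1n alt_odd; apply/eqP => E.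
  have ea : (a * b) ^+ n./2 = a.
    by move/eqP: E; rewrite mulg_eq1 inv2 // => /eqP.
  have cm : commute (a * b) a by rewrite -{2}ea; apply: commuteX; exact: commute_refl.
  have bab : a * b * a = b.
    by rewrite cm mulgA mul2 // mul1g.
  have c2 : (a * b) ^+ 2 = 1.
    by rewrite expgS expg1 mulgA bab mul2.
  have m2 : m = 2.
    apply/eqP; rewrite eqn_leq hm andbT; apply: dvdn_leq => //.
    by rewrite -hab order_dvdn c2.
  have : (n./2 < 2)%N.
    move: nlt; rewrite m2 -(odd_double_half n) on add1n.
    move: (n./2) => q; lia.
  case: (n./2) ea => [|[|//]] ea _.
    by move: ha; rewrite -ea expg0 order1.
  move: hb ea; rewrite expg1 => hb /(congr1 (mulg a^-1)).
  by rewrite mulKg mulVg => b1; move: hb; rewrite b1 order1.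
rewrite add0n alt_even; apply/eqP => /eqP E.
move: E; rewrite -order_dvdn hab => /dvdn_leq.
have : n = n./2.*2 by rewrite -{1}(odd_double_half n) on.
move=> en.
move: n0 nlt; rewrite en; move: (n./2) => q n0 nlt.
have h0 : (0 < q)%N by lia.
rewrite doubleK => /(_ h0); lia.
Qed.

Lemma cancel_same j k a b : (j <= k)%N -> alt a b k = alt a b j ->
  alt a b (k - j) = 1 \/ alt b a (k - j) = 1.
Proof.
elim: j k a b => [|j IH] [|k] a b //=; rewrite ?subn0; try by left.
rewrite ltnS subSS => jk /mulgI E.
by case: (IH k b a jk E); [right|left].
Qed.

Lemma cross j k a b : #[a] = 2 -> #[b] = 2 -> alt a b k = alt b a j ->
  alt a b (k + j) = 1 \/ alt b a (k + j) = 1.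
Proof.
move=> ha hb; elim: j k a b ha hb => [|j IH] k a b ha hb /=.
  by rewrite addn0; left.
move=> E.
have E2 : alt b a k.+1 = alt a b j by rewrite altS E mulgA mul2 // mul1g.
case: (IH k.+1 b a hb ha E2) => h; [right|left]; by rewrite addnS -addSn.
Qed.

Lemma neq_same a b m j k :
  (forall n, (0 < n)%N -> (n < m + m)%N -> alt a b n != 1 /\ alt b a n != 1) ->
  (j < k)%N -> (k <= m)%N -> alt a b k != alt a b j.
Proof.
move=> N jk km; apply/eqP => E.
have n0 : (0 < k - j)%N by rewrite subn_gt0.
have n1 : (k - j < m + m)%N by lia.
case: (N _ n0 n1) => N1 N2.
by case: (@cancel_same j k a b (ltnW jk) E) => /eqP; [move: N1|move: N2] => /negbTE ->.
Qed.

Lemma neq_cross a b m j k : #[a] = 2 -> #[b] = 2 ->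
  (forall n, (0 < n)%N -> (n < m + m)%N -> alt a b n != 1 /\ alt b a n != 1) ->
  (0 < k + j)%N -> (k + j < m + m)%N -> alt a b k != alt b a j.
Proof.
move=> ha hb N n0 n1; apply/eqP => E.
case: (N _ n0 n1) => N1 N2.
by case: (@cross j k a b ha hb E) => /eqP; [move: N1|move: N2] => /negbTE ->.
Qed.

End Alt.

Lemma find_iota (P : pred nat) k a N : (k < N)%N -> P (a + k) ->
  (forall j, (j < k)%N -> ~~ P (a + j)) -> find P (iota a N) = k.
Proof.
elim: k a N => [|k IH] a [|N] //= kN Pk Pj.
  by rewrite addn0 in Pk; rewrite Pk.
have := Pj 0 isT; rewrite addn0 => /negbTE ->; congr S.
apply: IH => //; first by rewrite addSnnS.
by move=> j jk; rewrite addSnnS; apply: Pj.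
Qed.


Section Dih.
Variables (gT : finGroupType) (x y : gT) (m : nat) (S : {set gT}).
Hypotheses (hx : #[x] = 2) (hy : #[y] = 2) (hxy : #[x * y] = m) (hm : (2 <= m)%N)
  (hS : S = [set x; y]).

Lemma hyx : #[y * x] = m.
Proof. by rewrite -{1}(inv2 hx) -{1}(inv2 hy) -invMg orderV. Qed.

Lemma Nxy n : (0 < n)%N -> (n < m + m)%N -> alt x y n != 1 /\ alt y x n != 1.
Proof.
move=> n0 n1; split; [exact: (N1 hx hy hxy hm n0 n1) | exact: (N1 hy hx hyx hm n0 n1)].
Qed.

Lemma Nyx n : (0 < n)%N -> (n < m + m)%N -> alt y x n != 1 /\ alt x y n != 1.
Proof. by move=> n0 n1; case: (Nxy n0 n1). Qed.

Lemma D3 : alt x y m = alt y x m.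
Proof.
have : alt x y (m + m) = 1 by rewrite addnn alt_even -hxy expg_order.
by rewrite alt_double // => /eqP; rewrite mulg_eq1 invgK => /eqP.
Qed.

Lemma w0inv : (alt x y m)^-1 = alt x y m.
Proof. by rewrite alt_inv //; case: (odd m); rewrite // D3. Qed.

Lemma sp_alt k : alt x y k \in setpow S k /\ alt y x k \in setpow S k.
Proof.
elim: k => [|k [IH1 IH2]]; first by rewrite /setpow /= set11.
rewrite /setpow iterS -/(setpow S k) !altS.
by split; apply: mem_mulg => //; rewrite hS ?set21 ?set22.
Qed.

Lemma sp_inv n w : w \in setpow S n ->
  exists k, (k <= n)%N /\ (w = alt x y k \/ w = alt y x k).
Proof.
elim: n w => [|n IH] w.
  by rewrite /setpow /= => /set1P ->; exists 0; split => //; left.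
rewrite /setpow iterS -/(setpow S n) => /mulsgP [a w' Ha Hw' ->].
case: (IH w' Hw') => k [kn [->|->]]; move: Ha; rewrite hS => /set2P [->|->].
- case: k kn => [|k] kn.
    by exists 1%N; split => //; left; rewrite alt1 mulg1.
  exists k; split; first by apply: (leq_trans (leqnSn k)); apply: (leq_trans kn).
  by right; rewrite altS mulgA mul2 // mul1g.
- by exists k.+1; split => //; right.
- by exists k.+1; split => //; left.
- case: k kn => [|k] kn.
    by exists 1%N; split => //; right; rewrite alt1 mulg1.
  exists k; split; first by apply: (leq_trans (leqnSn k)); apply: (leq_trans kn).
  by left; rewrite altS mulgA mul2 // mul1g.
Qed.

Lemma m_lt : (m < #|gT|)%N.
Proof.
rewrite -{1}hxy -cardsT /order; apply: proper_card; rewrite properT.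
apply/negP => /eqP E.
have : x \in <[x * y]> by rewrite E inE.
case/cyclePmin => i ilt ex.
have n1 : (i.*2.+1 < m + m)%N by rewrite hxy in ilt; lia.
case: (Nxy (isT : (0 < i.*2.+1)%N) n1) => /negP H _; apply: H.
by rewrite alt_odd -ex mul2.
Qed.

Lemma wlen_alt k : (k <= m)%N ->
  wlen S (alt x y k) = k /\ wlen S (alt y x k) = k.
Proof.
move=> km; have kN : (k < #|gT|)%N by apply: leq_ltn_trans km m_lt.
case: (sp_alt k) => A1 A2.
split; rewrite /wlen; apply: (@find_iota _ k 0) => //; rewrite ?add0n //.
- move=> j jk; rewrite add0n; apply/negP => /sp_inv [k' [k'j [E|E]]].
    by move/eqP: E; apply/negP; apply: (neq_same Nxy) => //; apply: leq_ltn_trans jk.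
  move/eqP: E; apply/negP; apply: (neq_cross hx hy Nxy); lia.
- move=> j jk; rewrite add0n; apply/negP => /sp_inv [k' [k'j [E|E]]].
    move/eqP: E; apply/negP; apply: (neq_cross hy hx Nyx); lia.
  by move/eqP: E; apply/negP; apply: (neq_same Nyx) => //; apply: leq_ltn_trans jk.
Qed.

Lemma alt_W k : alt x y k \in <<S>> /\ alt y x k \in <<S>>.
Proof.
have xS : x \in <<S>> by apply: mem_gen; rewrite hS set21.
have yS : y \in <<S>> by apply: mem_gen; rewrite hS set22.
elim: k => [|k [IH1 IH2]]; first by rewrite /= group1.
by rewrite !altS; split; apply: groupM.
Qed.

Lemma step (a b : gT) : #[a] = 2 -> alt a b m = alt b a m -> forall w,
  (exists k, (k <= m)%N /\ (w = alt a b k \/ w = alt b a k)) ->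
  (exists k, (k <= m)%N /\ (a * w = alt a b k \/ a * w = alt b a k)).
Proof.
move=> ha D w [k [km [->|->]]].
  case: k km => [|k] km.
    by exists 1%N; split; [apply: ltnW | left; rewrite alt1 mulg1].
  by exists k; split; [apply: ltnW | right; rewrite altS mulgA mul2 // mul1g].
case: (ltnP k m) => km'.
  by exists k.+1; split => //; left.
have ekm : k = m by apply/eqP; rewrite eqn_leq km km'.
rewrite ekm -D; case: m hm D km km' ekm => [|m'] //= _ _ _ _ _.
by exists m'; split => //; right; rewrite mulgA mul2 // mul1g.
Qed.

Lemma cover w : w \in <<S>> ->
  exists k, (k <= m)%N /\ (w = alt x y k \/ w = alt y x k).
Proof.
case/gen_prodgP => n [c Hc ->].
elim: n c Hc => [|n IH] c Hc.
  by rewrite big_ord0; exists 0; split => //; left.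
rewrite big_ord_recl.
have := IH (fun i => c (lift ord0 i)) (fun i => Hc _).
move: (Hc ord0); rewrite hS => /set2P [->|->] H.
  exact: (step hx D3 H).
have H' : exists k, (k <= m)%N /\ (\prod_(i < n) c (lift ord0 i) = alt y x k \/
    \prod_(i < n) c (lift ord0 i) = alt x y k).
  by case: H => k [km [E|E]]; exists k; split => //; [right|left].
by case: (step hy (esym D3) H') => k [km [E|E]]; exists k; split => //; [right|left].
Qed.

Lemma Xx w : w \in Xset <<S>> S [set x] <-> exists2 k, (k < m)%N & w = alt y x k.
Proof.
have key : forall k, (0 < k)%N -> (k <= m)%N -> w = alt x y k ->
    ~~ (wlen S w < wlen S (x * w))%N.
  move=> [|k] // _ km ->; rewrite altS mulgA mul2 // mul1g.
  have [-> _] := wlen_alt km; have [_ ->] := wlen_alt (ltnW km).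
  by rewrite ltnNge negbK leqnSn.
have m0 : (0 < m)%N by apply: ltnW hm.
split.
  rewrite inE => /andP [wW /forall_inP H]; have Hx := H x (set11 x).
  case: (cover wW) => k [km [E|E]].
  - case: k km E => [|k] km E; first by exists 0 => //; rewrite E.
    by have := key k.+1 isT km E; rewrite Hx.
  - case: (ltnP k m) => km'; first by exists k.
    have ekm : k = m by apply/eqP; rewrite eqn_leq km km'.
    by rewrite ekm -D3 in E; have := key _ m0 (leqnn m) E; rewrite Hx.
case=> k km ->; rewrite inE; apply/andP; split; first by case: (alt_W k).
apply/forall_inP => r /set1P ->; rewrite -altS.
by have [_ ->] := wlen_alt (ltnW km); have [-> _] := wlen_alt km.
Qed.

Lemma Xsh w : (w \in Xset <<S>> S [set x] /\ x ^ w \in S) <->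
  (w = 1 \/ w = alt y x m.-1).
Proof.
have m0 : (0 < m)%N by apply: ltnW hm.
split.
  case => /Xx [k km ->] xw.
  case: k km xw => [|k] km xw; first by left.
  case: (eqVneq k.+1 m.-1) => [e|ne]; first by right; rewrite e.
  exfalso; have kk : (k.+2 < m)%N by lia.
  have E : alt x y k.+2 = alt y x k.+1 * (x ^ alt y x k.+1).
    by rewrite conjgE mulKVg altS.
  move: xw E; rewrite hS => /set2P.
  have H2 := alt_rcons k.+1 y x; have H1 := alt_rcons k y x.
  rewrite oddS in H2; case: (odd k) H1 H2 => H1 H2 [->|->] E.
  - move: E; rewrite H1 -mulgA mul2 // mulg1 => /eqP; apply/negP.
    by apply: (neq_cross hx hy Nxy); lia.
  - move: E; rewrite -H2 => /eqP; apply/negP.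
    by apply: (neq_cross hx hy Nxy); lia.
  - move: E; rewrite -H2 => /eqP; apply/negP.
    by apply: (neq_cross hx hy Nxy); lia.
  - move: E; rewrite H1 -mulgA mul2 // mulg1 => /eqP; apply/negP.
    by apply: (neq_cross hx hy Nxy); lia.
case=> ->.
  split; first by apply/Xx; exists 0 => //.
  by rewrite conjg1 hS set21.
split; first by apply/Xx; exists m.-1 => //; lia.
have em : m = m.-1.+1 by lia.
have H := alt_rcons m.-1 y x; rewrite -em in H.
rewrite conjgE -altS -em D3 H mulKg hS.
by case: (odd _); rewrite ?set21 ?set22.
Qed.

End Dih.

Lemma sub2 (T : finType) (a b : T) (L : {set T}) : L \subset [set a; b] ->
  [\/ L = set0, L = [set a], L = [set b] | L = [set a; b]].
Proof.
move/subsetP => H.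
have Hz z : z \in L -> z = a \/ z = b by move/H/set2P.
case: (boolP (a \in L)) => ha; case: (boolP (b \in L)) => hb.
- apply: Or44; apply/setP => z; rewrite !inE; apply/idP/idP.
    by move/Hz => [->|->]; rewrite eqxx ?orbT.
  by case/orP => /eqP ->.
- apply: Or42; apply/setP => z; rewrite !inE; apply/idP/idP.
    by move=> zL; case: (Hz z zL) => e; [rewrite e eqxx | move: hb; rewrite -e zL].
  by move/eqP ->.
- apply: Or43; apply/setP => z; rewrite !inE; apply/idP/idP.
    by move=> zL; case: (Hz z zL) => e; [move: ha; rewrite -e zL | rewrite e eqxx].
  by move/eqP ->.
- apply: Or41; apply/setP => z; rewrite !inE; apply/negP => zL.
  by case: (Hz z zL) => e; [move: ha|move: hb]; rewrite -e zL.
Qed.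

Lemma decomp (T : finType) (a b : T) (F : {set T} -> algC) : a != b ->
  (\sum_(L : {set T} | L \subset [set a; b]) F L =
   F set0 + F [set a] + F [set b] + F [set a; b])%R.
Proof.
move=> ab.
have n0a : (set0 : {set T}) != [set a].
  by apply/eqP => /setP /(_ a); rewrite !inE eqxx.
have n0b : (set0 : {set T}) != [set b].
  by apply/eqP => /setP /(_ b); rewrite !inE eqxx.
have n0ab : (set0 : {set T}) != [set a; b].
  by apply/eqP => /setP /(_ a); rewrite !inE eqxx.
have nab : [set a] != [set b].
  by apply/eqP => /setP /(_ a); rewrite !inE eqxx (negbTE ab).
have naab : [set a] != [set a; b].
  apply/eqP => /setP /(_ b); rewrite !inE eqxx orbT => E.
  by move: ab; rewrite eq_sym E.
have nbab : [set b] != [set a; b].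
  by apply/eqP => /setP /(_ a); rewrite !inE eqxx (negbTE ab).
rewrite (bigD1 set0) ?sub0set //= (bigD1 [set a]) /=; last first.
  by rewrite eq_sym n0a andbT sub1set set21.
rewrite (bigD1 [set b]) /=; last first.
  by rewrite eq_sym n0b eq_sym nab sub1set set22.
rewrite (bigD1 [set a; b]) /=; last first.
  by rewrite subxx eq_sym n0ab eq_sym naab eq_sym nbab.
rewrite big_pred0 ?addr0 ?addrA // => L.
case: (boolP (L \subset [set a; b])) => //= /sub2 [] ->;
  by rewrite ?eqxx /= ?andbF.
Qed.

Lemma sum_gel_inv (gT : finGroupType) (X : {set gT}) h :
  (\sum_(x in X) gel x^-1)%R h = ((((h^-1)%g \in X)%:R)%R : algC).
Proof.
rewrite sum_ffunE; under eq_bigr do rewrite ffunE.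
case: (boolP (h^-1 \in X)) => H.
  rewrite (bigD1 h^-1) //= invgK eqxx big1 ?addr0 // => x /andP [_ ne].
  by case: eqP => // E; move: ne; rewrite E invgK eqxx.
rewrite big1 // => x xX; case: eqP => // E.
by move: H; rewrite E invgK xX.
Qed.

Lemma sum_gel (gT : finGroupType) (X : {set gT}) h :
  (\sum_(x in X) gel x)%R h = (((h \in X)%:R)%R : algC).
Proof.
rewrite sum_ffunE; under eq_bigr do rewrite ffunE.
case: (boolP (h \in X)) => H.
  rewrite (bigD1 h) //= eqxx big1 ?addr0 // => x /andP [_ ne].
  by case: eqP => // E; move: ne; rewrite E eqxx.
rewrite big1 // => x xX; case: eqP => // E.
by move: H; rewrite E xX.
Qed.

Lemma Xset_U (gT : finGroupType) (W A J1 J2 : {set gT}) :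
  Xset W A (J1 :|: J2) = Xset W A J1 :&: Xset W A J2.
Proof.
apply/setP => w; rewrite !inE; case: (w \in W) => //=.
apply/forall_inP/andP => [H|[/forall_inP H1 /forall_inP H2] r].
  by split; apply/forall_inP => r Hr; apply: H; rewrite inE Hr ?orbT.
by rewrite inE => /orP [] Hr; [apply: H1|apply: H2].
Qed.

Lemma Xset0 (gT : finGroupType) (W A : {set gT}) : Xset W A set0 = W.
Proof.
apply/setP => w; rewrite !inE; case: (w \in W) => //=.
by apply/forall_inP => r; rewrite inE.
Qed.

Lemma Xsharp0 (gT : finGroupType) (W A : {set gT}) : Xsharp W A set0 = W.
Proof. by apply/setP => w; rewrite /Xsharp Xset0 inE conj0g sub0set andbT. Qed.

From mathcomp Require Import ring.
Theorem lemma5p4 (gT : finGroupType) (s t w0 : gT) (m : nat) :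
  #[s] = 2%N -> #[t] = 2%N -> #[s * t] = m -> (2 <= m)%N ->
  let S := [set s; t] in
  let W := <<S>> in
  w0 \in W -> (forall w, w \in W -> (wlen S w <= wlen S w0)%N) ->
  (exists e : {set gT} -> {ffun gT -> algC}, e_rel W S e) /\
  (forall e : {set gT} -> {ffun gT -> algC}, e_rel W S e ->
     e S = (Av <[w0]> - Av W)%R).
Proof.
move=> hs ht hst hm S W w0W hmax.
have hS : S = [set s; t] by [].
have hS' : S = [set t; s] by rewrite hS setUC.
have hts := hyx hs ht hst.
have Nst := Nxy hs ht hst hm.
have Nts := Nxy ht hs hts hm.
have m0 : (0 < m)%N by lia.
have st : s != t.
  by apply/eqP => E; move: hst; rewrite -E mul2 // order1 => m1; lia.
have ew0 : w0 = alt s t m.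
  case: (cover hs ht hst hm hS w0W) => k [km E].
  have := hmax _ (alt_W hS m).1.
  have [l1 _] := wlen_alt hs ht hst hm hS (leqnn m).
  have [l2 l3] := wlen_alt hs ht hst hm hS km.
  case: E => E; rewrite E; [rewrite l2 | rewrite l3]; rewrite l1 => mk;
    have ekm : k = m by lia.
    by rewrite ekm.
  by rewrite ekm (D3 hs ht hst).
have w0i : w0^-1 = w0 by rewrite ew0 (w0inv hs ht hst).
have XsP := Xx hs ht hst hm hS.
have XtP := Xx ht hs hts hm hS'.
set Xs := Xset W S [set s].
set Xt := Xset W S [set t].
have XsW : Xs \subset W by apply/subsetP => w; rewrite inE => /andP [].
have XtW : Xt \subset W by apply/subsetP => w; rewrite inE => /andP [].
have XI : Xs :&: Xt = [set 1].
  apply/setP => w; rewrite in_setI in_set1; apply/andP/eqP.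
    case => /XsP [k km ->] /XtP [k' km' E].
    case: (posnP (k' + k)) => kk.
      by have -> : k = 0%N by lia.
    by move/eqP: E; rewrite eq_sym (negbTE (neq_cross hs ht Nst kk _)) //; lia.
  by move=> ->; split; [apply/XsP | apply/XtP]; exists 0%N.
have XU : Xs :|: Xt = W :\ w0.
  apply/setP => w; rewrite in_setU in_setD1; apply/orP/andP.
    case => [/XsP [k km ->] | /XtP [k km ->]]; split; rewrite ?ew0.
    - by rewrite eq_sym; apply: (neq_cross hs ht Nst); lia.
    - exact: (alt_W hS k).2.
    - by rewrite eq_sym; apply: (neq_same Nst).
    - exact: (alt_W hS k).1.
  case => ne wW; case: (cover hs ht hst hm hS wW) => k [km [E|E]].
    case: (ltnP k m) => km'; first by right; apply/XtP; exists k.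
    have ekm : k = m by lia.
    by move: ne; rewrite E ekm ew0 eqxx.
  case: (ltnP k m) => km'; first by left; apply/XsP; exists k.
  have ekm : k = m by lia.
  by move: ne; rewrite E ekm ew0 (D3 hs ht hst) eqxx.
have XSS : Xset W S S = [set 1] by rewrite {2}hS Xset_U.
have cardU : (#|Xs| + #|Xt| = #|W|)%N.
  by rewrite -cardsUI XU XI cards1 (cardsD1 w0 W) w0W addnC.
have sh1 : Xs :&: Xsharp W S [set s] = [set 1; alt t s m.-1].
  apply/setP => w; rewrite in_setI in_set2 /Xsharp inE conjg_set1 sub1set.
  have H := Xsh hs ht hst hm hS w.
  apply/idP/idP => [/andP [h1 /andP [_ h2]] | /orP [] /eqP e].
  - by case: (proj1 H (conj h1 h2)) => ->; rewrite eqxx ?orbT.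
  - have [h1 h2] := proj2 H (or_introl e).
    by apply/andP; split; [exact: h1 | apply/andP; split; [exact: h1 | exact: h2]].
  - have [h1 h2] := proj2 H (or_intror e).
    by apply/andP; split; [exact: h1 | apply/andP; split; [exact: h1 | exact: h2]].
have sh2 : Xt :&: Xsharp W S [set t] = [set 1; alt s t m.-1].
  apply/setP => w; rewrite in_setI in_set2 /Xsharp inE conjg_set1 sub1set.
  have H := Xsh ht hs hts hm hS' w.
  apply/idP/idP => [/andP [h1 /andP [_ h2]] | /orP [] /eqP e].
  - by case: (proj1 H (conj h1 h2)) => ->; rewrite eqxx ?orbT.
  - have [h1 h2] := proj2 H (or_introl e).
    by apply/andP; split; [exact: h1 | apply/andP; split; [exact: h1 | exact: h2]].
  - have [h1 h2] := proj2 H (or_intror e).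
    by apply/andP; split; [exact: h1 | apply/andP; split; [exact: h1 | exact: h2]].
have m00 : mKL W S set0 set0 = #|W| by rewrite /mKL sub0set Xset0 Xsharp0 setIid.
have ms0 : mKL W S [set s] set0 = #|Xs|.
  by rewrite /mKL sub0set Xsharp0 (setIidPl XsW).
have mt0 : mKL W S [set t] set0 = #|Xt|.
  by rewrite /mKL sub0set Xsharp0 (setIidPl XtW).
have mss : mKL W S [set s] [set s] = 2%N.
  rewrite /mKL subxx sh1 cards2; congr _.+1.
  have H : alt t s m.-1 != 1 by apply: (@neq_same _ t s m 0 m.-1 Nts); lia.
  by rewrite eq_sym H.
have mtt : mKL W S [set t] [set t] = 2%N.
  rewrite /mKL subxx sh2 cards2; congr _.+1.
  have H : alt s t m.-1 != 1 by apply: (@neq_same _ s t m 0 m.-1 Nst); lia.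
  by rewrite eq_sym H.
have mst : mKL W S [set s] [set t] = 0%N.
  by rewrite /mKL sub1set in_set1 eq_sym (negbTE st).
have mts : mKL W S [set t] [set s] = 0%N.
  by rewrite /mKL sub1set in_set1 (negbTE st).
have msS : mKL W S [set s] S = 0%N.
  rewrite /mKL; case: ifP => // /subsetP /(_ t); rewrite hS set22 in_set1 => /(_ isT).
  by rewrite eq_sym (negbTE st).
have mtS : mKL W S [set t] S = 0%N.
  rewrite /mKL; case: ifP => // /subsetP /(_ s); rewrite hS set21 in_set1 => /(_ isT).
  by rewrite (negbTE st).
have m0L (L : {set gT}) (z : gT) : z \in L -> mKL W S set0 L = 0%N.
  by move=> zL; rewrite /mKL; case: ifP => // /subsetP /(_ z zL); rewrite inE.
have w1 : wlen S 1 = 0%N by exact: (wlen_alt hs ht hst hm hS (leq0n m)).1.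
have ws : wlen S s = 1%N.
  by have := (wlen_alt hs ht hst hm hS m0).1; rewrite alt1.
have wt : wlen S t = 1%N.
  by have := (wlen_alt hs ht hst hm hS m0).2; rewrite alt1.
have mSL (L : {set gT}) : L \subset S -> mKL W S S L = 1%N.
  move=> LS; rewrite /mKL LS XSS.
  have : 1 \in Xsharp W S L.
    rewrite inE conjsg1 LS andbT inE group1 /=; apply/forall_inP => r rL.
    move/subsetP: LS => /(_ r rL); rewrite hS => /set2P [] ->;
      by rewrite mulg1 w1 ?ws ?wt.
  by rewrite -sub1set => /setIidPl ->; rewrite cards1.
have sumE : forall (e : {set gT} -> {ffun gT -> algC}) K h,
  ((\sum_(L : {set gT} | L \subset S) sc (mKL W S K L)%:R (e L)) h =
   (mKL W S K set0)%:R * e set0 h + (mKL W S K [set s])%:R * e [set s] h +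
   (mKL W S K [set t])%:R * e [set t] h + (mKL W S K S)%:R * e S h)%R.
  move=> e K h; rewrite sum_ffunE; under eq_bigr do rewrite ffunE.
  by rewrite hS (decomp _ st).
have sS : [set s] \subset S by rewrite sub1set set21.
have tS : [set t] \subset S by rewrite sub1set set22.
have relP : forall e, e_rel W S e <-> forall h : gT,
   [/\ ((h \in W)%:R = #|W|%:R * e set0 h)%R,
       (((h^-1)%g \in Xs)%:R = #|Xs|%:R * e set0 h + 2%:R * e [set s] h)%R,
       (((h^-1)%g \in Xt)%:R = #|Xt|%:R * e set0 h + 2%:R * e [set t] h)%R &
       ((h == 1%g)%:R = e set0 h + e [set s] h + e [set t] h + e S h)%R].
  move=> e; split.
    move=> H h.
    have H0 := congr1 (fun f : {ffun gT -> algC} => f h) (H set0 (sub0set _)).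
    have H1 := congr1 (fun f : {ffun gT -> algC} => f h) (H [set s] sS).
    have H2 := congr1 (fun f : {ffun gT -> algC} => f h) (H [set t] tS).
    have H3 := congr1 (fun f : {ffun gT -> algC} => f h) (H S (subxx _)).
    rewrite /= /xJ sum_gel_inv sumE in H0.
    rewrite /= /xJ sum_gel_inv sumE in H1.
    rewrite /= /xJ sum_gel_inv sumE in H2.
    rewrite /= /xJ sum_gel_inv sumE in H3.
    rewrite Xset0 groupV m00 (m0L _ _ (set11 s)) (m0L _ _ (set11 t))
      (m0L _ _ (set21 s t)) in H0.
    rewrite ms0 mss mst msS in H1.
    rewrite mt0 mtt mts mtS in H2.
    rewrite XSS in_set1 invg_eq1 (mSL _ (sub0set _)) (mSL _ sS) (mSL _ tS)
      (mSL _ (subxx _)) in H3.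
    rewrite ?mulr0n ?mul0r ?addr0 ?add0r ?mulr1n ?mul1r in H0 H1 H2 H3.
    by split.
  move=> H K /sub2 [] ->; apply/ffunP => h; rewrite /xJ sum_gel_inv sumE;
    case: (H h) => H0 H1 H2 H3.
  - rewrite Xset0 groupV m00 (m0L _ _ (set11 s)) (m0L _ _ (set11 t))
      (m0L _ _ (set21 s t)).
    by rewrite ?mulr0n ?mul0r ?addr0 ?add0r ?mulr1n ?mul1r.
  - rewrite ms0 mss mst msS.
    by rewrite ?mulr0n ?mul0r ?addr0 ?add0r ?mulr1n ?mul1r.
  - rewrite mt0 mtt mts mtS.
    by rewrite ?mulr0n ?mul0r ?addr0 ?add0r ?mulr1n ?mul1r.
  - rewrite -hS XSS in_set1 invg_eq1 (mSL _ (sub0set _)) (mSL _ sS) (mSL _ tS)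
      (mSL _ (subxx _)).
    by rewrite ?mulr0n ?mul0r ?addr0 ?add0r ?mulr1n ?mul1r.
have nW : ((#|W|%:R : algC) != 0)%R.
  rewrite pnatr_eq0 -lt0n; apply/card_gt0P; exists 1%g; exact: group1.
have n2 : ((2%:R : algC) != 0)%R by rewrite pnatr_eq0.
split.
  pose E0 := fun h : gT => (((h \in W)%:R) / (#|W|%:R))%R : algC.
  pose Es := fun h : gT => ((((h^-1)%g \in Xs)%:R - #|Xs|%:R * E0 h) / 2%:R)%R.
  pose Et := fun h : gT => ((((h^-1)%g \in Xt)%:R - #|Xt|%:R * E0 h) / 2%:R)%R.
  pose ES := fun h : gT => ((h == 1%g)%:R - E0 h - Es h - Et h)%R.
  pose e := fun L : {set gT} => [ffun h => if L == set0 then E0 h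
     else if L == S then ES h else if s \in L then Es h else Et h].
  have S0 : S != set0 by apply/eqP => /setP /(_ s); rewrite hS set21 inE.
  have s0 : [set s] != set0 by apply/eqP => /setP /(_ s); rewrite set11 inE.
  have t0 : [set t] != set0 by apply/eqP => /setP /(_ t); rewrite set11 inE.
  have sS' : [set s] != S.
    by apply/eqP => /setP /(_ t); rewrite hS set22 in_set1 eq_sym (negbTE st).
  have tS' : [set t] != S.
    by apply/eqP => /setP /(_ s); rewrite hS set21 in_set1 (negbTE st).
  exists e; apply/relP => h; rewrite !ffunE eqxx (negbTE S0) (negbTE s0)
    (negbTE t0) (negbTE sS') (negbTE tS') eqxx set11 in_set1 (negbTE st).
  split; rewrite /ES /Es /Et /E0; field; done.
move=> e /relP H; apply/ffunP => h; case: (H h) => H0 H1 H2 H3.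
rewrite !ffunE !sum_gel.
have w01 : w0 != 1%g.
  by rewrite ew0; apply: (@neq_same _ s t m 0 m Nst).
have cyc : <[w0]> = [set 1%g; w0].
  apply/setP => z; apply/cycleP/set2P => [[i ->]|[->|->]].
  - have w2 : (w0 ^+ 2 = 1)%g by rewrite expgS expg1 -{1}w0i mulVg.
    rewrite -(expg_mod _ w2) modn2; case: (odd i); [right; exact: expg1 | left; exact: expg0].
  - by exists 0%N.
  - by exists 1%N; rewrite expg1.
have memE : (((h \in <[w0]>)%:R : algC) = (h == 1%g)%:R + (h == w0)%:R)%R.
  rewrite cyc in_set2; case: (eqVneq h 1%g) => [->|_]; last by rewrite add0r.
  by rewrite eq_sym (negbTE w01) addr0.
have keyN : ((h^-1 \in Xs) + (h^-1 \in Xt) + (h == w0) = (h \in W) + (h == 1%g))%N.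
  have U : ((h^-1 \in Xs) || (h^-1 \in Xt)) = (h != w0) && (h \in W).
    by rewrite -in_setU XU in_setD1 eqg_invLR w0i groupV.
  have I : ((h^-1 \in Xs) && (h^-1 \in Xt)) = (h == 1).
    by rewrite -in_setI XI in_set1 invg_eq1.
  have Ww : (h == w0) ==> (h \in W) by apply/implyP => /eqP ->.
  move: U I Ww; case: (h^-1 \in Xs); case: (h^-1 \in Xt); case: (h == w0);
    case: (h \in W); case: (h == 1) => //=.
have key : ((((h^-1)%g \in Xs)%:R + ((h^-1)%g \in Xt)%:R + (h == w0)%:R : algC) =
   (h \in W)%:R + (h == 1%g)%:R)%R.
  by rewrite -!natrD keyN.
have cardR : ((#|Xs|%:R + #|Xt|%:R : algC) = #|W|%:R)%R by rewrite -natrD cardU.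
rewrite memE cyc cards2 eq_sym w01.
have e0E : (e set0 h = (h \in W)%:R / #|W|%:R)%R by rewrite H0; field.
have esE : (e [set s] h = (((h^-1)%g \in Xs)%:R - #|Xs|%:R * e set0 h) / 2%:R)%R.
  by rewrite H1; field.
have etE : (e [set t] h = (((h^-1)%g \in Xt)%:R - #|Xt|%:R * e set0 h) / 2%:R)%R.
  by rewrite H2; field.
have eSE : (e S h = (h == 1%g)%:R - e set0 h - e [set s] h - e [set t] h)%R.
  by rewrite H3; ring.
have itE : ((((h^-1)%g \in Xt)%:R : algC) =
   (h \in W)%:R + (h == 1%g)%:R - (h == w0)%:R - ((h^-1)%g \in Xs)%:R)%R.
  by rewrite -key; ring.
have ntE : ((#|Xt|%:R : algC) = #|W|%:R - #|Xs|%:R)%R by rewrite -cardR; ring.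
rewrite eSE esE etE e0E itE ntE.
have -> : true.+1 = 2%N by [].
move: nW; set a := ((h == 1%g)%:R)%R; set b := ((h \in W)%:R)%R; set c := (#|W|%:R)%R.
set d := ((h^-1%g \in Xs)%:R)%R; set f := (#|Xs|%:R)%R; set g := ((h == w0)%:R)%R => nW.
by field.
Qed.
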